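(* Let $P$ be a finite connected poset such that $J(P)$ is tCDE with edge density $c=\mathbb{E}(\mathrm{uni}_{J(P)};\mathrm{ddeg})$. Then the antichain cardinality statistic $I\mapsto\#\max(I)$ has average exactly $c$ along every orbit of rowmotion $\Phi_{\mathrm{row}}$ acting on $J(P)$. If moreover $P$ is ranked with maximum rank $r$, then the same holds for every orbit of $\Phi_{\mathrm{row}(\sigma)}$ acting on $J(P)$, for every permutation $\sigma$ of $\{0,1,\ldots,r\}$.
   Context: $J(P)$ is the lattice of order ideals of $P$ under inclusion; $\mathrm{ddeg}(I)$ (the number of elements covered by $I$) equals $\#\max(I)$; $\mathrm{uni}$ is uniform. $\mathcal{T}^+_p(I)=1$ iff $p\notin I$ and $p$ minimal in $P\setminus I$; $\mathcal{T}^-_p(I)=1$ iff $p\in I$ and $p$ maximal in $I$. $\mu$ is toggle-symmetric if $\mathbb{E}(\mu;\mathcal{T}^+_p)=\mathbb{E}(\mu;\mathcal{T}^-_p)$ for all $p$; $J(P)$ is tCDE if $\mathbb{E}(\mu;\mathrm{ddeg})=\mathbb{E}(\mathrm{uni}_{J(P)};\mathrm{ddeg})$ for every toggle-symmetric $\mu$. Rowmotion: $\Phi_{\mathrm{row}}(I):=\{x\in P: x\le y\text{ for some }y\in\min(P\setminus I)\}$. For ranked $P$ (rank function with $0$ in its image, increasing by 1 along covers), the toggle $\tau_p$ adds $p$ to $I$ if $p\notin I$ is minimal in $P\setminus I$, removes $p$ if $p\in I$ is maximal in $I$, and otherwise fixes $I$; $\tau_i$ is the composition of all $\tau_p$ with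 $\mathrm{rk}(p)=i$; $\Phi_{\mathrm{row}(\sigma)}:=\tau_{\sigma(0)}\circ\cdots\circ\tau_{\sigma(r)}$. *)

(* Defs.v *)
From HB Require Import structures.
From mathcomp Require Import all_boot all_order all_algebra all_fingroup.
Set Implicit Arguments. Unset Strict Implicit. Unset Printing Implicit Defensive.
Import Order.Theory GRing.Theory Num.Theory.

Section Defs.
Context {d : Order.disp_t} {T : finPOrderType d}.

Definition connected_poset : Prop :=
  0 < #|T| /\ forall x y : T, connect (fun a b : T => (a >=< b)%O) x y.

(* order ideals (down-closed subsets); J(P) = the ideals, ordered by inclusion *)
Definition is_ideal (I : {set T}) : bool :=
  [forall y, (y \in I) ==> [forall x, (x <= y)%O ==> (x \in I)]].

Definition maxset (I : {set T}) : {set T} :=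
  [set x in I | [forall y, (y \in I) ==> ~~ (x < y)%O]].

Definition minset_compl (I : {set T}) : {set T} :=
  [set x | (x \notin I) && [forall y, (y < x)%O ==> (y \in I)]].

Definition ideal_covered (J I : {set T}) : bool :=
  [&& is_ideal J, is_ideal I, J \proper I &
   [forall K : {set T}, ~~ [&& is_ideal K, J \proper K & K \proper I]]].

Definition ddeg (I : {set T}) : nat := #|[set J | ideal_covered J I]|.

Definition Tplus (p : T) (I : {set T}) : nat := p \in minset_compl I.
Definition Tminus (p : T) (I : {set T}) : nat := p \in maxset I.

Definition expect {R : realFieldType} (mu : {set T} -> R) (f : {set T} -> nat) : R :=
  (\sum_(I : {set T} | is_ideal I) mu I * (f I)%:R)%R.

Definition is_distribution {R : realFieldType} (mu : {set T} -> R) : Prop :=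
  (forall I, is_ideal I -> 0 <= mu I)%R /\
  (\sum_(I : {set T} | is_ideal I) mu I = 1)%R.

Definition uni {R : realFieldType} : {set T} -> R :=
  fun _ => (#|[set I : {set T} | is_ideal I]|%:R)^-1%R.

Definition toggle_symmetric {R : realFieldType} (mu : {set T} -> R) : Prop :=
  forall p : T, expect mu (Tplus p) = expect mu (Tminus p).

Definition tCDE (R : realFieldType) : Prop :=
  forall mu : {set T} -> R, is_distribution mu -> toggle_symmetric mu ->
    expect mu ddeg = expect (@uni R) ddeg.

Definition rowmotion (I : {set T}) : {set T} :=
  [set x | [exists y, (y \in minset_compl I) && (x <= y)%O]].

Definition covers (x y : T) : bool :=
  (x < y)%O && [forall z, ~~ ((x < z)%O && (z < y)%O)].

Definition ranked (rk : T -> nat) : Prop :=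
  (exists x, rk x = 0) /\ forall x y, covers x y -> rk y = (rk x).+1.

Definition toggle (p : T) (I : {set T}) : {set T} :=
  if p \in minset_compl I then p |: I
  else if p \in maxset I then I :\ p else I.

Definition rank_toggle (rk : T -> nat) (i : nat) (I : {set T}) : {set T} :=
  foldr toggle I [seq p <- enum T | rk p == i].

(* Phi_row(sigma) = tau_{sigma(0)} o ... o tau_{sigma(r)} *)
Definition rowmotion_sigma (rk : T -> nat) (r : nat) (s : 'S_r.+1)
    (I : {set T}) : {set T} :=
  foldr (fun i J => rank_toggle rk (val (s i)) J) I (enum 'I_r.+1).

Definition orbit_avg_antichain {R : realFieldType} (f : {set T} -> {set T})
    (I : {set T}) : R :=
  ((\sum_(J <- fingraph.orbit f I) (#|maxset J|)%:R) / (size (fingraph.orbit f I))%:R)%R.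

End Defs.

(* Main.v *)
Require Import Defs.
From HB Require Import structures.
From mathcomp Require Import all_boot all_order all_algebra all_fingroup.
Set Implicit Arguments. Unset Strict Implicit. Unset Printing Implicit Defensive.
Import Order.Theory GRing.Theory Num.Theory.

Section Aux.
Context {d : Order.disp_t} {T : finPOrderType d}.
Implicit Types (I J K : {set T}) (p x y z : T).

Lemma idealP K : reflect (forall x y, y \in K -> (x <= y)%O -> x \in K) (is_ideal K).
Proof.
apply: (iffP forallP) => [H x y yK lexy|H y].
  by move/implyP: (H y) => /(_ yK) /forallP /(_ x) /implyP; apply.
by apply/implyP=> yK; apply/forallP=> x; apply/implyP; apply: H.
Qed.

Lemma lower_cover x y : (x < y)%O -> exists z, covers z y && (x <= z)%O.
Proof.
move=> Hxy.
suff: forall n x, #|[set w | (x < w)%O && (w < y)%O]| < n -> (x < y)%O ->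
   exists z, covers z y && (x <= z)%O by apply; [apply: ltnSn|].
elim=> [//|n IH] {Hxy} x Hn Hxy.
case Hc: (covers x y); first by exists x; rewrite Hc lexx.
move/negbT: Hc; rewrite /covers Hxy /= negb_forall => /existsP[w].
rewrite negbK => /andP[xw wy].
have [z /andP[cz wz]] : exists z, covers z y && (w <= z)%O.
  rewrite ltnS in Hn; apply: (IH w) => //; apply: (leq_trans _ Hn).
  apply: proper_card; apply/properP; split.
    by apply/subsetP=> v; rewrite !inE => /andP[wv ->]; rewrite (lt_trans xw wv).
  by exists w; rewrite !inE ?xw ?wy ?ltxx ?andbF.
by exists z; apply/andP; split => //; apply: le_trans (ltW xw) wz.
Qed.

Lemma upper_cover x y : (x < y)%O -> exists z, covers x z && (z <= y)%O.
Proof.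
move=> Hxy.
suff: forall n y, #|[set w | (x < w)%O && (w < y)%O]| < n -> (x < y)%O ->
   exists z, covers x z && (z <= y)%O by apply; [apply: ltnSn|].
elim=> [//|n IH] {Hxy} y Hn Hxy.
case Hc: (covers x y); first by exists y; rewrite Hc lexx.
move/negbT: Hc; rewrite /covers Hxy /= negb_forall => /existsP[w].
rewrite negbK => /andP[xw wy].
have [z /andP[cz wz]] : exists z, covers x z && (z <= w)%O.
  rewrite ltnS in Hn; apply: (IH w) => //; apply: (leq_trans _ Hn).
  apply: proper_card; apply/properP; split.
    by apply/subsetP=> v; rewrite !inE => /andP[-> vw]; rewrite (lt_trans vw wy).
  by exists w; rewrite !inE ?xw ?wy ?ltxx ?andbF.
by exists z; apply/andP; split => //; apply: le_trans wz (ltW wy).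
Qed.

Lemma plus_char K p : is_ideal K ->
  (p \in minset_compl K) = (p \notin K) && [forall z, covers z p ==> (z \in K)].
Proof.
move=> /idealP HK; rewrite inE; congr (_ && _).
apply/forallP/forallP => H z; apply/implyP.
  by move=> /andP[zp _]; move/implyP: (H z); apply.
move=> zp; have [w /andP[cw zw]] := lower_cover zp.
move/implyP: (H w) => /(_ cw) wK; exact: HK zw.
Qed.

Lemma minus_char K p : is_ideal K ->
  (p \in Defs.maxset K) = (p \in K) && [forall z, covers p z ==> (z \notin K)].
Proof.
move=> /idealP HK; rewrite inE; case pK: (p \in K) => //=.
apply/forallP/forallP => H z; apply/implyP.
  by move=> /andP[pz _]; apply/negP => zK; move/implyP: (H z) => /(_ zK); rewrite pz.
move=> zK; apply/negP => pz; have [w /andP[cw wz]] := upper_cover pz.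
by move/implyP: (H w) => /(_ cw); rewrite (HK w z zK wz).
Qed.

Lemma toggle_other K p x : x != p -> (x \in toggle p K) = (x \in K).
Proof.
move=> xp; rewrite /toggle; case: ifP => _; first by rewrite !inE (negbTE xp).
by case: ifP => _ //; rewrite !inE xp.
Qed.

Lemma toggle_self K p :
  (p \in toggle p K) = ((p \in K) != ((p \in minset_compl K) || (p \in Defs.maxset K))).
Proof.
rewrite /toggle; case: ifP => H.
  by move: H; rewrite inE setU11 => /andP[/negbTE -> _].
case: ifP => H2; first by move: H2; rewrite !inE eqxx => /andP[->].
by case: (p \in K).
Qed.

Lemma toggle_ideal K p : is_ideal K -> is_ideal (toggle p K).
Proof.
move=> HK; have HK' := idealP _ HK; apply/idealP => x y.
rewrite /toggle; case: ifP => [|_].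
  rewrite inE => /andP[pK /forallP H]; rewrite !inE => /orP[/eqP-> xp|yK xy].
    by rewrite le_eqVlt in xp; case/orP: xp => [->//|/(implyP (H x)) ->]; rewrite orbT.
  by rewrite (HK' x y yK xy) orbT.
case: ifP => [|_]; last exact: HK'.
rewrite inE => /andP[pK /forallP H]; rewrite !inE => /andP[yp yK] xy.
rewrite (HK' x y yK xy) andbT; apply/eqP=> xpe; subst x.
have : (p < y)%O by rewrite lt_def yp xy.
by move/implyP: (H y) => /(_ yK) /negP.
Qed.

Lemma toggleK K p : is_ideal K -> toggle p (toggle p K) = K.
Proof.
move=> HK; apply/setP => x; case: (eqVneq x p) => [->|xp]; last by rewrite !toggle_other.
have HK' := toggle_ideal p HK.
rewrite toggle_self (toggle_self K) (plus_char _ HK') (minus_char _ HK')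
        (plus_char _ HK) (minus_char _ HK).
have ot : forall z, z != p -> (z \in toggle p K) = (z \in K).
  by move=> z; apply: toggle_other.
have Hl : [forall z, covers z p ==> (z \in toggle p K)] = [forall z, covers z p ==> (z \in K)].
  apply: eq_forallb => z; case cz: (covers z p) => //=; rewrite ot //.
  by apply/eqP => e; move: cz; rewrite e /covers ltxx.
have Hu : [forall z, covers p z ==> (z \notin toggle p K)] = [forall z, covers p z ==> (z \notin K)].
  apply: eq_forallb => z; case cz: (covers p z) => //=; rewrite ot //.
  by apply/eqP => e; move: cz; rewrite e /covers ltxx.
rewrite Hl Hu toggle_self (plus_char _ HK) (minus_char _ HK).
have HKi := idealP _ HK.
have Hb : (p \in K) -> [forall z, covers z p ==> (z \in K)].
  move=> pK; apply/forallP=> z; apply/implyP=> /andP[zp _]; exact: HKi (ltW zp).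
have Hc : (p \notin K) -> [forall z, covers p z ==> (z \notin K)].
  move=> pK; apply/forallP=> z; apply/implyP=> /andP[zp _].
  by apply: contra pK => zK; exact: HKi (ltW zp).
move: Hb Hc.
by move: (p \in K) [forall z, covers z p ==> (z \in K)] [forall z, covers p z ==> (z \notin K)] => [] [] [] //=; by [move/(_ isT) | move=> _ /(_ isT)].
Qed.


Lemma lowers_in K p : is_ideal K -> p \in K -> [forall z, covers z p ==> (z \in K)].
Proof.
move=> /idealP HKi pK; apply/forallP=> z; apply/implyP=> /andP[zp _]; exact: HKi (ltW zp).
Qed.

Lemma uppers_out K p : is_ideal K -> p \notin K -> [forall z, covers p z ==> (z \notin K)].
Proof.
move=> /idealP HKi pK; apply/forallP=> z; apply/implyP=> /andP[zp _].
by apply: contra pK => zK; exact: HKi (ltW zp).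
Qed.

Lemma plus_agree K1 K2 p : is_ideal K1 -> is_ideal K2 ->
  (p \in K1) = (p \in K2) -> (forall z, covers z p -> (z \in K1) = (z \in K2)) ->
  (p \in minset_compl K1) = (p \in minset_compl K2).
Proof.
move=> H1 H2 Hp Hz; rewrite (plus_char _ H1) (plus_char _ H2) Hp; congr (_ && _).
by apply: eq_forallb => z; case cz: (covers z p) => //=; rewrite Hz.
Qed.

Lemma minus_agree K1 K2 p : is_ideal K1 -> is_ideal K2 ->
  (p \in K1) = (p \in K2) -> (forall z, covers p z -> (z \in K1) = (z \in K2)) ->
  (p \in Defs.maxset K1) = (p \in Defs.maxset K2).
Proof.
move=> H1 H2 Hp Hz; rewrite (minus_char _ H1) (minus_char _ H2) Hp; congr (_ && _).
by apply: eq_forallb => z; case cz: (covers p z) => //=; rewrite Hz.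
Qed.

Lemma row_ideal J : is_ideal (rowmotion J).
Proof.
apply/idealP => x y; rewrite !inE => /existsP[z /andP[zm yz]] xy.
by apply/existsP; exists z; rewrite zm (le_trans xy yz).
Qed.

Lemma max_row J : Defs.maxset (rowmotion J) = minset_compl J.
Proof.
apply/setP => x; apply/idP/idP.
  rewrite inE => /andP[]; rewrite inE => /existsP[y /andP[ym xy]] /forallP H.
  move: xy; rewrite le_eqVlt => /orP[/eqP->//|xy].
  have yr : y \in rowmotion J by rewrite inE; apply/existsP; exists y; rewrite ym lexx.
  by move/implyP: (H y) => /(_ yr); rewrite xy.
move=> xm; rewrite inE; apply/andP; split.
  by rewrite inE; apply/existsP; exists x; rewrite xm lexx.
apply/forallP => y; apply/implyP; rewrite inE => /existsP[z /andP[zm yz]].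
apply/negP => xy; have xz := lt_le_trans xy yz.
move: xm zm; rewrite !inE => /andP[xJ _] /andP[_ /forallP H].
by move/implyP: (H x); rewrite xz => /(_ isT); apply/negP.
Qed.

Lemma exists_min J x : x \notin J -> exists y, (y \in minset_compl J) && (y <= x)%O.
Proof.
suff: forall n x, #|[set w | (w < x)%O]| < n -> x \notin J ->
  exists y, (y \in minset_compl J) && (y <= x)%O by apply; apply: ltnSn.
elim=> [//|n IH] {}x Hn xJ.
case Hm: (x \in minset_compl J); first by exists x; rewrite Hm lexx.
move: Hm; rewrite inE xJ /= => /negbT; rewrite negb_forall => /existsP[w].
rewrite negb_imply => /andP[wx wJ].
have [y /andP[ym yw]] : exists y, (y \in minset_compl J) && (y <= w)%O.
  rewrite ltnS in Hn; apply: (IH w) => //; apply: (leq_trans _ Hn).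
  apply: proper_card; apply/properP; split.
    by apply/subsetP=> v; rewrite !inE => vw; rewrite (lt_trans vw wx).
  by exists w; rewrite !inE ?wx ?ltxx.
by exists y; rewrite ym (le_trans yw (ltW wx)).
Qed.

Lemma ideal_from_min J : is_ideal J ->
  J = [set x | ~~ [exists y, (y \in minset_compl J) && (y <= x)%O]].
Proof.
move=> /idealP HJ; apply/setP => x; rewrite inE; case xJ: (x \in J).
  apply/esym/negP => /existsP[y /andP[]]; rewrite inE => /andP[yJ _] yx.
  by move: yJ; rewrite (HJ y x xJ yx).
by apply/esym; apply: negbF; apply/existsP; apply: exists_min; rewrite xJ.
Qed.

Lemma row_inj J1 J2 : is_ideal J1 -> is_ideal J2 -> rowmotion J1 = rowmotion J2 -> J1 = J2.
Proof.
move=> H1 H2 E; have := max_row J1; rewrite E max_row => Em.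
by rewrite (ideal_from_min H1) (ideal_from_min H2) Em.
Qed.

Lemma ftog_other l K x : x \notin l -> (x \in foldr toggle K l) = (x \in K).
Proof.
elim: l => [//|a l IH] /=; rewrite inE negb_or => /andP[xa xl].
by rewrite toggle_other // IH.
Qed.

Lemma ftog_ideal l K : is_ideal K -> is_ideal (foldr toggle K l).
Proof. by move=> HK; elim: l => [//|a l IH] /=; apply: toggle_ideal. Qed.

Lemma ftog_inj l K1 K2 : is_ideal K1 -> is_ideal K2 ->
  foldr toggle K1 l = foldr toggle K2 l -> K1 = K2.
Proof.
move=> H1 H2; elim: l => [//|a l IH] /= E; apply: IH.
by rewrite -(toggleK a (ftog_ideal l H1)) E toggleK //; apply: ftog_ideal.
Qed.

Lemma ftog_self l K x : is_ideal K -> uniq l ->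
  (forall a b, a \in l -> b \in l -> ~~ covers a b) -> x \in l ->
  (x \in foldr toggle K l) =
    ((x \in K) != ((x \in minset_compl K) || (x \in Defs.maxset K))).
Proof.
move=> HK; elim: l => [//|a l IH] /= /andP[al ul] Hc.
have Hc' : forall a b, a \in l -> b \in l -> ~~ covers a b.
  by move=> u v ul' vl'; apply: Hc; rewrite inE ?ul' ?vl' orbT.
rewrite inE; case: (eqVneq x a) => [->|xa] /= xl; last first.
  by rewrite toggle_other // IH.
have HL := ftog_ideal l HK.
have ag : forall z, (covers z a || covers a z) -> (z \in foldr toggle K l) = (z \in K).
  move=> z cz; apply: ftog_other; apply/negP => zl.
  by case/orP: cz; apply/negP; [apply: Hc|apply: Hc]; rewrite inE ?zl ?eqxx ?orbT.
have pa : (a \in foldr toggle K l) = (a \in K) by apply: ftog_other.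
rewrite toggle_self pa (plus_agree HL HK pa) ?(minus_agree HL HK pa) //.
  by move=> z cz; apply: ag; rewrite cz orbT.
by move=> z cz; apply: ag; rewrite cz.
Qed.


Section Rank.
Context (rk : T -> nat) (Hrk : forall x y, covers x y -> rk y = (rk x).+1).

Lemma cov_neq x y : covers x y -> rk x != rk y.
Proof. by move/Hrk => ->; rewrite eqn_leq ltnn andbF. Qed.

Lemma rt_other j K x : rk x != j -> (x \in rank_toggle rk j K) = (x \in K).
Proof. by move=> xj; rewrite /rank_toggle ftog_other // mem_filter negb_and xj. Qed.

Lemma rt_ideal j K : is_ideal K -> is_ideal (rank_toggle rk j K).
Proof. exact: ftog_ideal. Qed.

Lemma rt_inj j K1 K2 : is_ideal K1 -> is_ideal K2 ->
  rank_toggle rk j K1 = rank_toggle rk j K2 -> K1 = K2.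
Proof. exact: ftog_inj. Qed.

Lemma rt_self K p : is_ideal K ->
  (p \in rank_toggle rk (rk p) K) =
    ((p \in K) != ((p \in minset_compl K) || (p \in Defs.maxset K))).
Proof.
move=> HK; apply: ftog_self => //.
- by apply: filter_uniq; apply: enum_uniq.
- move=> a b; rewrite !mem_filter => /andP[/eqP ra _] /andP[/eqP rb _].
  by apply/negP => /cov_neq; rewrite ra rb eqxx.
- by rewrite mem_filter eqxx mem_enum.
Qed.

Lemma rt_plus K p : is_ideal K ->
  (p \in minset_compl (rank_toggle rk (rk p) K)) = (p \in Defs.maxset K).
Proof.
move=> HK; have HK' := rt_ideal (rk p) HK.
rewrite (plus_char _ HK') rt_self // (plus_char _ HK) (minus_char _ HK).
have -> : [forall z, covers z p ==> (z \in rank_toggle rk (rk p) K)] =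
          [forall z, covers z p ==> (z \in K)].
  by apply: eq_forallb => z; case cz: (covers z p) => //=; rewrite rt_other // cov_neq.
move: (lowers_in HK (p:=p)) (uppers_out HK (p:=p)).
move: (p \in K) [forall z, covers z p ==> (z \in K)] [forall z, covers p z ==> (z \notin K)] => [] [] [] //=; by [move/(_ isT) | move=> _ /(_ isT)].
Qed.

Lemma rt_minus K p : is_ideal K ->
  (p \in Defs.maxset (rank_toggle rk (rk p) K)) = (p \in minset_compl K).
Proof.
move=> HK; have HK' := rt_ideal (rk p) HK.
rewrite (minus_char _ HK') rt_self // (plus_char _ HK) (minus_char _ HK).
have -> : [forall z, covers p z ==> (z \notin rank_toggle rk (rk p) K)] =
          [forall z, covers p z ==> (z \notin K)].
  by apply: eq_forallb => z; case cz: (covers p z) => //=; rewrite rt_other // eq_sym cov_neq.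
move: (lowers_in HK (p:=p)) (uppers_out HK (p:=p)).
by move: (p \in K) [forall z, covers z p ==> (z \in K)] [forall z, covers p z ==> (z \notin K)] => [] [] [] //=; by [move/(_ isT) | move=> _ /(_ isT)].
Qed.

Definition Cr (ks : seq nat) K := foldr (rank_toggle rk) K ks.

Lemma Cr_other ks K x : rk x \notin ks -> (x \in Cr ks K) = (x \in K).
Proof.
elim: ks => [//|a ks IH] /=; rewrite inE negb_or => /andP[xa xl].
by rewrite rt_other // IH.
Qed.

Lemma Cr_ideal ks K : is_ideal K -> is_ideal (Cr ks K).
Proof. by move=> HK; elim: ks => [//|a ks IH] /=; apply: rt_ideal. Qed.

Lemma Cr_inj ks K1 K2 : is_ideal K1 -> is_ideal K2 -> Cr ks K1 = Cr ks K2 -> K1 = K2.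
Proof.
move=> H1 H2; elim: ks => [//|a ks IH] /= E; apply: IH.
exact: rt_inj (Cr_ideal ks H1) (Cr_ideal ks H2) E.
Qed.

Lemma Cr_plus ks K p : is_ideal K -> rk p \notin ks ->
  (forall j, j \in ks -> j.+1 != rk p) ->
  (p \in minset_compl (Cr ks K)) = (p \in minset_compl K).
Proof.
move=> HK pk Hj; apply: plus_agree => //; first exact: Cr_ideal.
  exact: Cr_other.
move=> z cz; apply: Cr_other; apply/negP => zk.
by move: (Hj _ zk); rewrite (Hrk cz) eqxx.
Qed.

Lemma Cr_minus ks K p : is_ideal K -> rk p \notin ks -> (rk p).+1 \notin ks ->
  (p \in Defs.maxset (Cr ks K)) = (p \in Defs.maxset K).
Proof.
move=> HK pk pk1; apply: minus_agree => //; first exact: Cr_ideal.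
  exact: Cr_other.
by move=> z cz; apply: Cr_other; rewrite (Hrk cz).
Qed.

End Rank.

Lemma ddeg_max I : is_ideal I -> ddeg I = #|Defs.maxset I|.
Proof.
move=> HI; have HIi := idealP _ HI; rewrite /ddeg.
have -> : [set J | ideal_covered J I] = [set I :\ x | x in Defs.maxset I].
  apply/setP => J; rewrite inE; apply/idP/imsetP.
  - case/and4P => HJ _ JI /forallP Hn; have HJi := idealP _ HJ.
    move/properP: (JI) => [sJI [x xI xJ]].
    have xIJ : x \in I :\: J by rewrite inE xJ xI.
    have [y yIJ ymin] := @arg_minnP _ x (mem (I :\: J)) (fun y => #|[set w | (w < y)%O]|) xIJ.
    move: yIJ; rewrite !inE => /andP[yJ yI].
    have lowJ : forall w, (w < y)%O -> w \in J.
      move=> w wy; apply/negPn/negP => wJ.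
      have wIJ : w \in I :\: J by rewrite inE wJ (HIi w y yI (ltW wy)).
      have := ymin w wIJ; apply/negP; rewrite -ltnNge.
      apply: proper_card; apply/properP; split.
        by apply/subsetP=> v; rewrite !inE => vw; rewrite (lt_trans vw wy).
      by exists w; rewrite !inE ?wy ?ltxx.
    have HK : is_ideal (y |: J).
      apply/idealP => a b; rewrite !inE => /orP[/eqP->|bJ] ab.
        by move: ab; rewrite le_eqVlt => /orP[->//|/lowJ ->]; rewrite orbT.
      by rewrite (HJi a b bJ ab) orbT.
    have EK : y |: J = I.
      apply/eqP; move: (Hn (y |: J)); rewrite HK /= negb_and => /orP[|].
        move=> /negP []; rewrite properEneq subsetUr andbT; apply/eqP => E.
        by move: yJ; rewrite {1}E setU11.
      rewrite properEneq negb_and negbK => /orP[//|].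
      by rewrite subUset sub1set yI sJI.
    exists y.
      rewrite inE yI; apply/forallP => z; apply/implyP => zI; apply/negP => yz.
      have zJ : z \in J.
        move: zI; rewrite -EK !inE => /orP[/eqP E|//].
        by move: yz; rewrite E ltxx.
      by move: yJ; rewrite (HJi y z zJ (ltW yz)).
    by rewrite -EK setU1K.
  - case=> x; rewrite inE => /andP[xI /forallP xmax] ->.
    apply/and4P; split.
    + apply/idealP => a b; rewrite !inE => /andP[bx bI] ab.
      rewrite (HIi a b bI ab) andbT; apply/eqP => E; subst a.
      by have := implyP (xmax b) bI; rewrite lt_def ab bx.

    + exact: HI.
    + exact: properD1.
    + apply/forallP => K; apply/negP => /and3P[_ /proper_card c1 /proper_card c2].
      by move: (leq_ltn_trans c1 c2); rewrite (cardsD1 x I) xI add1n ltnS ltnn.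
rewrite card_in_imset // => a b aM bM E.
move: aM; rewrite inE => /andP[aI _].
apply/eqP; apply: contraT => ab.
have : a \in I :\ b by rewrite !inE aI andbT.
by rewrite -E !inE eqxx.
Qed.


Section Orb.
Context (f : {set T} -> {set T}) (Hid : forall K, is_ideal K -> is_ideal (f K))
  (Hinj : forall K1 K2, is_ideal K1 -> is_ideal K2 -> f K1 = f K2 -> K1 = K2).

Lemma orbit_ideal I J : is_ideal I -> J \in fingraph.orbit f I -> is_ideal J.
Proof.
move=> HI; rewrite -fconnect_orbit => /iter_findex <-.
by elim: (findex f I J) => [//|n IH] /=; apply: Hid.
Qed.

Lemma orbit_perm I : is_ideal I ->
  perm_eq (map f (fingraph.orbit f I)) (fingraph.orbit f I).
Proof.
move=> HI; set s := fingraph.orbit f I.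
have us : uniq s := orbit_uniq f I.
have ums : uniq (map f s).
  rewrite map_inj_in_uniq // => a b as_ bs; apply: Hinj; exact: orbit_ideal HI _.
apply: uniq_perm => //.
have sub : {subset map f s <= s} .
  by move=> y /mapP[x xs ->]; exact: (fingraph.mem_orbit xs).
by have [] := uniq_min_size ums sub; rewrite ?size_map.
Qed.

Lemma orbit_reindex I (F : {set T} -> nat) : is_ideal I ->
  \sum_(J <- fingraph.orbit f I) F (f J) = \sum_(J <- fingraph.orbit f I) F J.
Proof. by move=> HI; rewrite -(big_map f xpredT F); apply: perm_big; apply: orbit_perm. Qed.

Local Open Scope ring_scope.
Lemma orbit_avg_main (R : realFieldType) : tCDE (T:=T) R ->
  (forall I p, is_ideal I -> (\sum_(J <- fingraph.orbit f I) Tplus p J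
                           = \sum_(J <- fingraph.orbit f I) Tminus p J)%N) ->
  forall I, is_ideal I -> orbit_avg_antichain (R:=R) f I = expect (@uni d T R) ddeg.
Proof.
move=> Htc Hts I HI.
set s := fingraph.orbit f I.
have us : uniq s := orbit_uniq f I.
have n0 : (size s)%:R != 0 :> R by rewrite pnatr_eq0 -lt0n fingraph.size_orbit fingraph.order_gt0.
pose mu := fun J : {set T} => if J \in s then ((size s)%:R)^-1 else 0 : R.
have Emu : forall g : {set T} -> nat,
    expect mu g = ((size s)%:R)^-1 * \sum_(J <- s) (g J)%:R.
  move=> g; rewrite big_uniq //= mulr_sumr /expect.
  rewrite big_mkcond /= [RHS]big_mkcond /=; apply: eq_bigr => J _; rewrite /mu.
  case Js: (J \in s); last by case: (is_ideal J); rewrite ?mul0r.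
  by rewrite (orbit_ideal HI Js).
have Hd : is_distribution mu.
  split.
    by move=> J _; rewrite /mu; case: ifP => _; rewrite ?invr_ge0 ?ler0n ?lexx.
  have := Emu (fun _ => 1%N); rewrite /expect.
  under eq_bigr do rewrite mulr1.
  by move=> ->; rewrite -natr_sum sum1_size mulVf.
have Hsym : toggle_symmetric mu.
  by move=> p; rewrite !Emu -!natr_sum (Hts I p HI).
rewrite -(Htc mu Hd Hsym) Emu /orbit_avg_antichain mulrC; congr (_ * _).
apply: eq_big_seq => J Js; rewrite ddeg_max //; exact: orbit_ideal HI Js.
Qed.

End Orb.


Lemma split_mem (x : nat) (L : seq nat) : x \in L -> exists L1 L2, L = L1 ++ x :: L2.
Proof. by case/splitPr => L1 L2; exists L1, L2. Qed.

Lemma Cr_ts (rk : T -> nat) (Hrk : forall x y, covers x y -> rk y = (rk x).+1)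
  (L : seq nat) (f : {set T} -> {set T}) (Hf : forall K, f K = Cr rk L K) :
  uniq L -> forall I p, is_ideal I -> rk p \in L ->
  \sum_(J <- fingraph.orbit f I) Tplus p J = \sum_(J <- fingraph.orbit f I) Tminus p J.
Proof.
move=> uL I p HI pL.
have Hid : forall K, is_ideal K -> is_ideal (f K) by move=> K HK; rewrite Hf; apply: Cr_ideal.
have Hinj : forall K1 K2, is_ideal K1 -> is_ideal K2 -> f K1 = f K2 -> K1 = K2.
  by move=> K1 K2 H1 H2; rewrite !Hf; apply: Cr_inj.
set i := rk p.
have [L1 [L2 EL]] := split_mem pL.
move: uL; rewrite EL cat_uniq => /and3P[u1 /hasPn dis /= /andP[iL2 u2]].
have iL1 : i \notin L1 by apply: dis; rewrite mem_head.
have dis2 : forall j, j \in L2 -> j \notin L1 by move=> j jL; apply: dis; rewrite inE jL orbT.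
have fE : forall K, f K = Cr rk L1 (rank_toggle rk i (Cr rk L2 K)).
  by move=> K; rewrite Hf EL /Cr foldr_cat.
set s := fingraph.orbit f I.
have sI : forall J, J \in s -> is_ideal J by move=> J Js; exact: (orbit_ideal Hid HI Js).
have reidx : forall F : {set T} -> nat, \sum_(J <- s) F (f J) = \sum_(J <- s) F J.
  by move=> F; apply: (orbit_reindex Hid Hinj).
have HP : \sum_(J <- s) Tplus p J =
    if has (fun j => j.+1 == i) L1 then \sum_(J <- s) Tplus p (Cr rk L2 J)
    else \sum_(J <- s) Tminus p (Cr rk L2 J).
  case: ifP => hl.
    apply: eq_big_seq => J Js; rewrite /Tplus Cr_plus ?sI //.
    move=> j jL2; apply/negP => /eqP ej; case/hasP: hl => j0 j0L /eqP ej0.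
    have ejj : j = j0 by apply: succn_inj; rewrite ej ej0.
    by move: (dis2 j jL2); rewrite ejj j0L.
  rewrite -reidx; apply: eq_big_seq => J Js.
  rewrite fE /Tplus /Tminus Cr_plus ?rt_plus //; first by apply: Cr_ideal; apply: sI.
    by apply: rt_ideal; apply: Cr_ideal; apply: sI.
  by move=> j jL1; apply/negP => ej; move/negbT/hasPn: hl => /(_ j jL1); rewrite ej.
have HM : \sum_(J <- s) Tminus p J =
    if i.+1 \in L1 then \sum_(J <- s) Tminus p (Cr rk L2 J)
    else \sum_(J <- s) Tplus p (Cr rk L2 J).
  case: ifP => hu.
    apply: eq_big_seq => J Js; rewrite /Tminus Cr_minus ?sI //.
    by apply: contraL hu; apply: dis2.
  rewrite -reidx; apply: eq_big_seq => J Js.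
  rewrite fE /Tplus /Tminus Cr_minus ?rt_minus ?hu //; first by apply: Cr_ideal; apply: sI.
  by apply: rt_ideal; apply: Cr_ideal; apply: sI.
have key : forall J, is_ideal J ->
   (Tplus p (Cr rk L2 J) = (p \notin J) && (p \in f J) :> nat) /\
   (Tminus p (Cr rk L2 J) = (p \in J) && (p \notin f J) :> nat).
  move=> J HJ; have HX := Cr_ideal rk L2 HJ.
  have pX : (p \in Cr rk L2 J) = (p \in J) by apply: Cr_other.
  have pf : (p \in f J) = ((p \in Cr rk L2 J) !=
      ((p \in minset_compl (Cr rk L2 J)) || (p \in Defs.maxset (Cr rk L2 J)))).
    by rewrite fE Cr_other // rt_self.
  have h1 : (p \in minset_compl (Cr rk L2 J)) -> p \notin Cr rk L2 J.
    by rewrite inE => /andP[].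
  have h2 : (p \in Defs.maxset (Cr rk L2 J)) -> p \in Cr rk L2 J.
    by rewrite inE => /andP[].
  rewrite pf /Tplus /Tminus; move: h1 h2; rewrite pX.
  by case: (p \in J); case: (p \in minset_compl _); case: (p \in Defs.maxset _) => //=; by [move/(_ isT) | move=> _ /(_ isT)].
have E4 : \sum_(J <- s) Tplus p (Cr rk L2 J) = \sum_(J <- s) Tminus p (Cr rk L2 J).
  have e1 : \sum_(J <- s) (p \in f J : nat) =
      \sum_(J <- s) (((p \in J) && (p \in f J) : nat) + Tplus p (Cr rk L2 J)).
    apply: eq_big_seq => J Js; rewrite (proj1 (key J (sI J Js))).
    by case: (p \in J); case: (p \in f J).
  have e2 : \sum_(J <- s) (p \in J : nat) =
      \sum_(J <- s) (((p \in J) && (p \in f J) : nat) + Tminus p (Cr rk L2 J)).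
    apply: eq_big_seq => J Js; rewrite (proj2 (key J (sI J Js))).
    by case: (p \in J); case: (p \in f J).
  have e3 := reidx (fun K => (p \in K : nat)).
  rewrite /= e1 e2 !big_split /= in e3.
  exact: addnI e3.
rewrite HP HM; case: ifP => _; case: ifP => _ //; exact: esym.
Qed.

End Aux.

Theorem corollary8p7 (R : realFieldType) (d : Order.disp_t) (T : finPOrderType d) :
  connected_poset (T := T) -> tCDE (T := T) R ->
  (forall I : {set T}, is_ideal I ->
     orbit_avg_antichain (R := R) rowmotion I = expect (@uni d T R) ddeg) /\
  (forall (rk : T -> nat) (r : nat), ranked rk -> r = (\max_(x : T) rk x)%N ->
   forall (s : 'S_r.+1) (I : {set T}), is_ideal I ->
     orbit_avg_antichain (R := R) (rowmotion_sigma rk s) I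
       = expect (@uni d T R) ddeg).
Proof.
move=> _ Htc; split.
  have Hid : forall K : {set T}, is_ideal K -> is_ideal (rowmotion K).
    by move=> K _; exact: row_ideal.
  apply: (orbit_avg_main Hid Htc) => I p HI.
  rewrite -(orbit_reindex Hid (@row_inj d T) (Tminus p) HI).
  by apply: eq_bigr => J _; rewrite /Tminus /Tplus max_row.
move=> rk r [_ Hrk] Hr s I HI.
set L := [seq val (s j) | j <- enum 'I_r.+1].
have Hf : forall K, rowmotion_sigma rk s K = Cr rk L K.
  by move=> K; rewrite /Cr foldr_map.
have Hid : forall K, is_ideal K -> is_ideal (rowmotion_sigma rk s K).
  by move=> K HK; rewrite Hf; apply: Cr_ideal.
have Hinj : forall K1 K2, is_ideal K1 -> is_ideal K2 ->
    rowmotion_sigma rk s K1 = rowmotion_sigma rk s K2 -> K1 = K2.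
  by move=> K1 K2 H1 H2; rewrite !Hf; apply: Cr_inj.
have uL : uniq L by rewrite map_inj_uniq ?enum_uniq // => a b /val_inj /perm_inj.
apply: (orbit_avg_main Hid Htc _ HI) => J p HJ.
apply: (Cr_ts Hrk Hf uL HJ).
have pr : rk p < r.+1 by rewrite ltnS Hr; apply: (leq_bigmax_cond (P:=xpredT)). 
apply/mapP; exists (s^-1 (Ordinal pr))%g; first by rewrite mem_enum.
by rewrite permKV.
Qed.
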